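(* Suppose Assumptions (A1), (A2) and (LIN) hold, $f$ is Lipschitz continuous with constant $L_f$, and $x\in\mathcal{X}$ is such that $y^*(x)$ is a single point. Then $$|\widetilde\phi_t(x)-\phi(x)|\le L_f\,\frac{kt}{\tau(x)\,\|\nabla_y g(x,y^*(x))\|}\quad\text{for all }t>0,$$ where $\tau(x):=\inf_{y\in\mathcal{Y}(x),\,y\neq y^*(x)}\cos\angle\big(\nabla_y g(x,y^*(x)),\,y-y^*(x)\big)>0$.
   Context: Let $f,g,h_1,\dots,h_k:\mathbb{R}^n\times\mathbb{R}^m\to\mathbb{R}$ and $\mathcal{X}\subseteq\mathbb{R}^n$. For $x\in\mathcal{X}$ let $\mathcal{Y}(x)=\{y: h_i(x,y)\le 0,\ i=1,\dots,k\}$, $y^*(x)=\arg\min_{y\in\mathcal{Y}(x)} g(x,y)$, and $\phi(x)=\min_{y\in y^*(x)} f(x,y)$. For $t>0$ let $\widetilde g_t(x,y)=g(x,y)-t\sum_{i=1}^k\log(-h_i(x,y))$ (defined when all $h_i(x,y)<0$), $y_t^*(x)=\arg\min_y\widetilde g_t(x,y)$ and $\widetilde\phi_t(x)=f(x,y_t^*(x))$. The cosine of the angle between vectors $u,v$ is $\langle u,v\rangle/(\|u\|\|v\|)$. Assumptions: (A1) $f$ is once and $g,h_i$ are twice continuously differentiable; (A2) $\mathcal{X}$ is convex and compact and for every $x\in\mathcal{X}$ there is $y$ with $h_i(x,y)<0$ for all $i$; (LIN) for every $x\in\mathcal{X}$, $g(x,\cdot)$ and all $h_i(x,\cdot)$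 are linear (affine) in $y$ and $\mathcal{Y}(x)$ is compact. *)

(* Defs.v *)
From HB Require Import structures.
From mathcomp Require Import all_boot all_order all_algebra.
From mathcomp Require Import all_classical all_reals all_analysis.
Set Implicit Arguments. Unset Strict Implicit. Unset Printing Implicit Defensive.
Import Order.TTheory GRing.Theory Num.Theory.
Import numFieldNormedType.Exports.
Local Open Scope classical_set_scope.
Local Open Scope ring_scope.

Section Defs.
Variable R : realType.

Definition dotv N (u v : 'rV[R]_N) : R := \sum_(j < N) u 0 j * v 0 j.
Definition enorm N (u : 'rV[R]_N) : R := Num.sqrt (dotv u u).
Definition cosang N (u v : 'rV[R]_N) : R := dotv u v / (enorm u * enorm v).

Definition evec N (i : 'I_N) : 'rV[R]_N := delta_mx 0 i.

Definition C1 N (F : 'rV[R]_N -> R) : Prop :=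
  forall i : 'I_N, (forall z, derivable F z (evec i)) /\
                   continuous (fun z => 'D_(evec i) F z).
Definition C2 N (F : 'rV[R]_N -> R) : Prop :=
  C1 F /\ forall i : 'I_N, C1 (fun z => 'D_(evec i) F z).

(* a function of (x,y) in R^n x R^m, seen as a function on R^(n+m) *)
Definition joint n m (F : 'rV[R]_n -> 'rV[R]_m -> R) : 'rV[R]_(n + m) -> R :=
  fun z => F (lsubmx z) (rsubmx z).

Definition grad_y n m (F : 'rV[R]_n -> 'rV[R]_m -> R) x y : 'rV[R]_m :=
  \row_(j < m) 'D_(evec j) (F x) y.

Definition affine_fun m (F : 'rV[R]_m -> R) : Prop :=
  exists (a : 'rV[R]_m) (c : R), forall y, F y = c + dotv a y.

Definition lipschitz_xy n m (F : 'rV[R]_n -> 'rV[R]_m -> R) (L : R) : Prop :=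
  forall x y x' y',
    `|F x y - F x' y'| <= L * Num.sqrt (enorm (x - x') ^+ 2 + enorm (y - y') ^+ 2).

Variables (n m k : nat).
Variables (f g : 'rV[R]_n -> 'rV[R]_m -> R) (h : 'I_k -> 'rV[R]_n -> 'rV[R]_m -> R).

Definition Yset x : set 'rV[R]_m := [set y | forall i, h i x y <= 0].
Definition ystar x : set 'rV[R]_m :=
  [set y | Yset x y /\ forall z, Yset x z -> g x y <= g x z].
Definition phi x : R := inf [set f x y | y in ystar x].
(* log-barrier function, on its domain (all h_i < 0) *)
Definition strict_feas x : set 'rV[R]_m := [set y | forall i, h i x y < 0].
Definition gbar (t : R) x y : R := g x y - t * \sum_(i < k) ln (- h i x y).
Definition ystar_t (t : R) x : set 'rV[R]_m :=
  [set y | strict_feas x y /\ forall z, strict_feas x z -> gbar t x y <= gbar t x z].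
(* tau(x) for a point y0 (= the unique element of y^*(x)) *)
Definition tau x (y0 : 'rV[R]_m) : R :=
  inf [set cosang (grad_y g x y0) (y - y0) | y in Yset x `\ y0].

End Defs.

(* Main.v *)
Require Import Defs.
From HB Require Import structures.
From mathcomp Require Import all_boot all_order all_algebra.
From mathcomp Require Import all_classical all_reals all_analysis.
From mathcomp Require Import ring lra.
Set Implicit Arguments. Unset Strict Implicit. Unset Printing Implicit Defensive.
Import Order.TTheory GRing.Theory Num.Theory.
Import numFieldNormedType.Exports.
Local Open Scope classical_set_scope.
Local Open Scope ring_scope.
Section Alg.
Variable R : realType.
Variable m : nat.
Implicit Types (a b u v d : 'rV[R]_m).

Lemma dotvDr a u v : dotv a (u + v) = dotv a u + dotv a v.
Proof. by rewrite /dotv -big_split; apply: eq_bigr => j _; rewrite mxE mulrDr. Qed.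

Lemma dotvZr a c u : dotv a (c *: u) = c * dotv a u.
Proof. by rewrite /dotv mulr_sumr; apply: eq_bigr => j _; rewrite mxE mulrCA. Qed.

Lemma dotvNr a u : dotv a (- u) = - dotv a u.
Proof. by rewrite -scaleN1r dotvZr mulN1r. Qed.

Lemma dotvBr a u v : dotv a (u - v) = dotv a u - dotv a v.
Proof. by rewrite dotvDr dotvNr. Qed.

Lemma dotv0r a : dotv a 0 = 0.
Proof. by rewrite /dotv big1 // => j _; rewrite mxE mulr0. Qed.

Lemma dotv0l a : dotv 0 a = 0.
Proof. by rewrite /dotv big1 // => j _; rewrite mxE mul0r. Qed.

Lemma dotvZl a c u : dotv (c *: a) u = c * dotv a u.
Proof. by rewrite /dotv mulr_sumr; apply: eq_bigr => j _; rewrite mxE mulrA. Qed.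

Lemma dotv_ge0 u : 0 <= dotv u u.
Proof. by apply: sumr_ge0 => j _; rewrite -expr2 sqr_ge0. Qed.

Lemma dotv_eq0 u : dotv u u = 0 -> u = 0.
Proof.
move=> /eqP; rewrite psumr_eq0; last by move=> j _; rewrite -expr2 sqr_ge0.
move=> /allP H; apply/rowP => j; rewrite mxE.
have := H j (mem_index_enum j); rewrite /= mulf_eq0 orbb => /eqP ->.
by [].
Qed.

Lemma enorm_ge0 u : 0 <= enorm u.
Proof. exact: sqrtr_ge0. Qed.

Lemma enorm0 : enorm (0 : 'rV[R]_m) = 0.
Proof. by rewrite /enorm dotv0r sqrtr0. Qed.

Lemma enorm_gt0 u : u != 0 -> 0 < enorm u.
Proof.
move=> u0; rewrite /enorm sqrtr_gt0 lt_neqAle dotv_ge0 andbT eq_sym.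
by apply/eqP => /dotv_eq0 /eqP; rewrite (negbTE u0).
Qed.

Lemma enormZ c u : enorm (c *: u) = `|c| * enorm u.
Proof.
by rewrite /enorm dotvZr dotvZl mulrA -expr2 sqrtrM ?sqr_ge0 // sqrtr_sqr.
Qed.

Lemma coord_le_enorm u j : `|u 0 j| <= enorm u.
Proof.
rewrite /enorm -sqrtr_sqr ler_sqrt ?dotv_ge0 // /dotv (bigD1 j) //= -expr2.
by rewrite lerDl; apply: sumr_ge0 => i _; rewrite -expr2 sqr_ge0.
Qed.

Lemma dotv_le a d : `|dotv a d| <= (\sum_j `|a 0 j|) * enorm d.
Proof.
rewrite /dotv mulr_suml; apply: le_trans (ler_norm_sum _ _ _) _.
apply: ler_sum => j _; rewrite normrM ler_wpM2l //; exact: coord_le_enorm.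
Qed.

Lemma dotv_evec a j : dotv a (evec R j) = a 0 j.
Proof.
rewrite /dotv (bigD1 j) //= big1 ?addr0; first by rewrite /evec mxE !eqxx mulr1.
by move=> i /negbTE ij; rewrite /evec mxE eqxx /= ij mulr0.
Qed.

End Alg.
Section Bar.
Variable R : realType.
Variable m : nat.

Lemma derive_affine (F : 'rV[R]_m -> R) (a : 'rV[R]_m) c y0 j :
  (forall y, F y = c + dotv a y) -> 'D_(evec R j) F y0 = a 0 j.
Proof.
move=> HF; rewrite /derive; apply: lim_near_cst; first exact: norm_hausdorff.
near=> h.
rewrite /= !HF dotvDr dotvZr dotv_evec.
have h0 : h != 0 by near: h; exact: nbhs_dnbhs_neq.
have -> : c + (h * a 0 j + dotv a y0) - (c + dotv a y0) = h * a 0 j by ring.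
by rewrite /GRing.scale /= mulrA mulVf // mul1r.
Unshelve. all: by end_near.
Qed.

Lemma barrier_bound (k : nat) (a : 'rV[R]_m) c (b : 'I_k -> 'rV[R]_m)
  (cb : 'I_k -> R) t yt y0 :
  0 < t ->
  (forall i, cb i + dotv (b i) yt < 0) ->
  (forall i, cb i + dotv (b i) y0 <= 0) ->
  (forall z, (forall i, cb i + dotv (b i) z < 0) ->
    (c + dotv a yt) - t * \sum_i ln (- (cb i + dotv (b i) yt)) <=
    (c + dotv a z) - t * \sum_i ln (- (cb i + dotv (b i) z))) ->
  dotv a (yt - y0) <= k%:R * t.
Proof.
move=> t0 Hyt Hy0 Hmin.
set D := dotv a (yt - y0).
have key : forall s, 0 < s -> s < 1 -> D * (1 - s) <= k%:R * t.
  move=> s s0 s1.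
  set z := yt + s *: (y0 - yt).
  have Hz i : cb i + dotv (b i) z =
      (1 - s) * (cb i + dotv (b i) yt) + s * (cb i + dotv (b i) y0).
    by rewrite /z dotvDr dotvZr dotvBr; ring.
  have zf i : cb i + dotv (b i) z < 0.
    rewrite Hz; have := Hyt i; have := Hy0 i; nra.
  have := Hmin z zf.
  have Ga : dotv a z = dotv a yt - s * D.
    by rewrite /z /D dotvDr dotvZr !dotvBr; ring.
  rewrite Ga.
  set w := s / (1 - s).
  have w1 : w * (1 - s) = s by rewrite /w mulfVK // subr_eq0 gt_eqF.
  have Hln i : ln (- (cb i + dotv (b i) yt)) - ln (- (cb i + dotv (b i) z)) <= w.
    set p := - (cb i + dotv (b i) yt); set q := - (cb i + dotv (b i) z).
    have p0 : 0 < p by rewrite /p oppr_gt0.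
    have q0 : 0 < q by rewrite /q oppr_gt0.
    have qp : (1 - s) * p <= q.
      rewrite /q /p Hz; have := Hy0 i; nra.
    rewrite -ln_div ?posrE //.
    have -> : p / q = 1 + (p / q - 1) by ring.
    apply: le_trans (le_ln1Dx _) _.
      have := divr_gt0 p0 q0; lra.
    rewrite lerBlDl.
    have s1' : 0 < 1 - s by rewrite subr_gt0.
    have -> : (1 + w) = (1 - s)^-1 by rewrite /w; field; rewrite subr_eq0 gt_eqF.
    rewrite ler_pdivrMr // -subr_ge0.
    have -> : (1 - s)^-1 * q - p = (1 - s)^-1 * (q - (1 - s) * p).
      by field; rewrite subr_eq0 gt_eqF.
    by rewrite mulr_ge0 ?invr_ge0 ?subr_ge0 // ltW.
  have Hsum : \sum_(i < k) (ln (- (cb i + dotv (b i) yt)) - ln (- (cb i + dotv (b i) z)))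
      <= k%:R * w.
    apply: le_trans (ler_sum _ (fun i _ => Hln i)) _.
    by rewrite sumr_const card_ord mulr_natl.
  rewrite sumrB in Hsum.
  move=> Hm.
  have H1 : s * D <= t * (k%:R * w).
    apply: le_trans (ler_wpM2l (ltW t0) Hsum); rewrite mulrBr; lra.
  have s1' : 0 < 1 - s by rewrite subr_gt0.
  have H2 : s * D * (1 - s) <= t * k%:R * s.
    have := ler_wpM2r (ltW s1') H1.
    have -> : t * (k%:R * w) * (1 - s) = t * k%:R * (w * (1 - s)) by ring.
    by rewrite w1.
  have : s * (D * (1 - s)) <= s * (k%:R * t).
    have -> : s * (D * (1 - s)) = s * D * (1 - s) by ring.
    have -> : s * (k%:R * t) = t * k%:R * s by ring.
    exact: H2.
  by rewrite ler_pM2l.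
have kt0 : 0 <= k%:R * t by rewrite mulr_ge0 // ltW.
rewrite leNgt; apply/negP => HD.
have D0 : 0 < D by apply: le_lt_trans HD.
pose s := (D - k%:R * t) / (2 * D).
have s0 : 0 < s by rewrite /s divr_gt0 ?subr_gt0 // mulr_gt0.
have s1 : s < 1.
  rewrite /s ltr_pdivrMr ?mulr_gt0 //; lra.
have := key s s0 s1.
have -> : D * (1 - s) = (D + k%:R * t) / 2.
  rewrite /s; field; rewrite gt_eqF //.
rewrite ler_pdivrMr //; lra.
Qed.

End Bar.
Section Topo.
Variable R : realType.
Variable m : nat.

Lemma cont_sum (F : 'I_m -> 'rV[R]_m -> R) :
  (forall j, continuous (F j)) -> continuous (fun y => \sum_j F j y).
Proof.
move=> HF.
suff H : forall s : seq 'I_m, continuous (fun y => \sum_(j <- s) F j y) by exact: H.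
elim=> [|j s IH] z.
  under eq_fun do rewrite big_nil.
  exact: cst_continuous.
under eq_fun do rewrite big_cons.
exact: (continuousD (HF j z) (IH z)).
Qed.

Lemma cont_dotv (u : 'rV[R]_m) : continuous (fun y : 'rV[R]_m => dotv u y).
Proof.
rewrite /dotv; apply: cont_sum => j z.
apply: continuousM; first exact: cst_continuous.
exact: coord_continuous.
Qed.

Lemma cont_dotvv : continuous (fun y : 'rV[R]_m => dotv y y).
Proof.
rewrite /dotv; apply: cont_sum => j z.
by apply: continuousM; exact: coord_continuous.
Qed.

Lemma cont_enormB (y0 : 'rV[R]_m) : continuous (fun y : 'rV[R]_m => enorm (y - y0)).
Proof.
move=> z; rewrite /enorm.
have H1 : {for z, continuous (fun y : 'rV[R]_m => y - y0)}.
  by apply: continuousB; [by [] | exact: cst_continuous].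
have H2 := continuous_comp H1 (@cont_dotvv (z - y0)).
exact: (continuous_comp H2 (@sqrt_continuous R _)).
Qed.

End Topo.
Section Tau.
Variable R : realType.
Variables (m k : nat).
Variables (a : 'rV[R]_m) (b : 'I_k -> 'rV[R]_m) (cb : 'I_k -> R) (y0 : 'rV[R]_m).

Definition hh i y := cb i + dotv (b i) y.
Definition YY := [set y | forall i, hh i y <= 0].

Lemma eps_exists : exists2 e, 0 < e &
  forall i, hh i y0 < 0 -> e * (\sum_j `|b i 0 j|) < - hh i y0.
Proof.
pose rho i := if hh i y0 < 0 then - hh i y0 / (\sum_j `|b i 0 j| + 1) else 1.
exists (\big[Order.min/1]_(i < k) rho i).
  apply: lt_bigmin => // i _; rewrite /rho; case: ifP => // hi.
  have B0 : 0 <= \sum_j `|b i 0 j| by apply: sumr_ge0.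
  by rewrite divr_gt0 ?oppr_gt0 //; lra.
move=> i hi.
have B0 : 0 <= \sum_j `|b i 0 j| by apply: sumr_ge0.
have hm : \big[Order.min/1]_(i0 < k) rho i0 <= rho i by exact: bigmin_le.
apply: (le_lt_trans (ler_wpM2r B0 hm)).
rewrite /rho hi mulrAC ltr_pdivrMr; last by lra.
rewrite ltr_pM2l ?oppr_gt0 //; lra.
Qed.

Lemma cont_dotvB (u : 'rV[R]_m) : continuous (fun y : 'rV[R]_m => dotv u (y - y0)).
Proof.
move=> z.
have H1 : {for z, continuous (fun y : 'rV[R]_m => y - y0)}.
  by apply: continuousB; [by [] | exact: cst_continuous].
have H2 := continuous_comp H1 (@cont_dotv R m u (z - y0)).
exact: H2.
Qed.

Lemma tau_pos : (0 < m)%N -> compact YY -> (exists ys, forall i, hh i ys < 0) -> YY y0 ->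
  (forall y, YY y -> y != y0 -> dotv a y0 < dotv a y) ->
  (exists y, YY y /\ y != y0) /\
  exists2 d, 0 < d & forall y, YY y -> y != y0 -> d <= cosang a (y - y0).
Proof.
move=> mpos HY [ys Hys] Y0 Huniq.
have [e e0 He] := eps_exists.
have cone d : enorm d <= e -> (forall i, ~ hh i y0 < 0 -> dotv (b i) d <= 0) ->
    YY (y0 + d).
  move=> Hd Hact i; rewrite /hh dotvDr addrA.
  have [hi|hi] := ltP (hh i y0) 0.
    have B0 : 0 <= \sum_j `|b i 0 j| by apply: sumr_ge0.
    have h1 := dotv_le (b i) d.
    have h2 := ler_norm (dotv (b i) d).
    have h3 := ler_wpM2l B0 Hd.
    have := He i hi; rewrite /hh in hi *; rewrite mulrC; lra.
  have := Hact i; rewrite /hh in hi *; have := Y0 i; rewrite /hh.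
  move=> h0 h1; have : dotv (b i) d <= 0.
    by apply: h1 => h; move: (le_lt_trans hi h); rewrite ltxx.
  lra.
have scale y : YY y -> y != y0 ->
    YY (y0 + (e / enorm (y - y0)) *: (y - y0)) /\
    enorm ((e / enorm (y - y0)) *: (y - y0)) = e.
  move=> Yy yn.
  have n0 : 0 < enorm (y - y0) by apply: enorm_gt0; rewrite subr_eq0.
  have l0 : 0 < e / enorm (y - y0) by rewrite divr_gt0.
  have En : enorm ((e / enorm (y - y0)) *: (y - y0)) = e.
    by rewrite enormZ gtr0_norm // mulfVK // gt_eqF.
  split => //; apply: cone; first by rewrite En.
  move=> i hi; rewrite dotvZr dotvBr; apply: mulr_ge0_le0; first exact: ltW.
  have := Yy i; have := Y0 i; rewrite /hh in hi *.
  move=> h0 h1; have h2 : 0 <= cb i + dotv (b i) y0 by rewrite leNgt; apply/negP.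
  lra.
have [y1 [Yy1 y1n]] : exists y, YY y /\ y != y0.
  case: (eqVneq ys y0) => [eys|ne]; last first.
    by exists ys; split => // i; apply: ltW.
  subst ys.
  pose ev := evec R (Ordinal mpos).
  have ev0 : ev != 0.
    apply/eqP => /rowP/(_ (Ordinal mpos)); rewrite !mxE eqxx /= => /eqP.
    by rewrite oner_eq0.
  have n0 : 0 < enorm ev by apply: enorm_gt0.
  exists (y0 + (e / enorm ev) *: ev); split.
    apply: cone; first by rewrite enormZ gtr0_norm ?divr_gt0 // mulfVK ?gt_eqF.
    by move=> i /(_ (Hys i)).
  rewrite -subr_eq0 addrAC subrr add0r scaler_eq0 negb_or ev0 andbT.
  by rewrite gt_eqF // divr_gt0.
pose S := YY `&` [set y | enorm (y - y0) = e].
have Scomp : compact S.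
  apply: compact_closedI => //.
  have -> : [set y | enorm (y - y0) = e] =
      (fun y => enorm (y - y0)) @^-1` [set x | x = e] by [].
  apply: preimage_closed; last exact: closed_eq.
  by move=> z _; apply: cont_enormB.
have Sne : S !=set0.
  have [h1 h2] := scale y1 Yy1 y1n.
  exists (y0 + (e / enorm (y1 - y0)) *: (y1 - y0)); split => //=.
  by rewrite addrAC subrr add0r.
have Scont : {within S, continuous (fun y => dotv a (y - y0))}.
  by apply: continuous_subspaceT; apply: cont_dotvB.
have [c /set_mem [Yc Ec] Hc] := EVT_min_rV Sne Scomp Scont.
have cn : c != y0.
  apply/eqP => cy; move: Ec; rewrite /= cy subrr enorm0 => e00.
  by move: e0; rewrite -e00 ltxx.
have d0 : 0 < dotv a (c - y0).
  by rewrite dotvBr subr_gt0; apply: Huniq.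
have an : a != 0.
  by apply/eqP => a0; move: d0; rewrite a0 dotv0l ltxx.
have A0 : 0 < enorm a by apply: enorm_gt0.
split; first by exists y1.
exists (dotv a (c - y0) / (enorm a * e)); first by rewrite divr_gt0 // mulr_gt0.
move=> y Yy yn.
have [h1 h2] := scale y Yy yn.
have n0 : 0 < enorm (y - y0) by apply: enorm_gt0; rewrite subr_eq0.
have mS : (y0 + (e / enorm (y - y0)) *: (y - y0)) \in S.
  by apply: mem_set; split => //=; rewrite addrAC subrr add0r.
have := Hc _ mS; rewrite /= addrAC subrr add0r dotvZr => H.
rewrite /cosang !invfM !mulrA.
rewrite [_ / enorm a / e]mulrAC [_ / enorm a / enorm (y - y0)]mulrAC.
rewrite ler_pM2r ?invr_gt0 // ler_pdivrMr //.
have -> : dotv a (y - y0) / enorm (y - y0) * e = e / enorm (y - y0) * dotv a (y - y0) by ring.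
exact: H.
Qed.

End Tau.
Unset Implicit Arguments.
Theorem theorem2 (R : realType) (n m k : nat) (mpos : (0 < m)%N)
  (f g : 'rV[R]_n -> 'rV[R]_m -> R) (h : 'I_k -> 'rV[R]_n -> 'rV[R]_m -> R)
  (X : set 'rV[R]_n)
  (* (A1) *)
  (Hf1 : C1 (joint f)) (Hg2 : C2 (joint g)) (Hh2 : forall i, C2 (joint (h i)))
  (* (A2) *)
  (HXconv : convex_set X) (HXcomp : compact X)
  (Hslater : forall x, X x -> exists y, forall i, h i x y < 0)
  (* (LIN) *)
  (Hlin : forall x, X x ->
     [/\ affine_fun (g x), forall i, affine_fun (h i x) & compact (Yset h x)])
  (Lf : R) (Hlip : lipschitz_xy f Lf)
  (x : 'rV[R]_n) (Hx : X x) (y0 : 'rV[R]_m) (Hy0 : ystar g h x = [set y0]) :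
  0 < tau g h x y0 /\
  forall t : R, 0 < t -> forall yt, ystar_t g h t x yt ->
    `|f x yt - phi f g h x| <=
      Lf * ((k%:R * t) / (tau g h x y0 * enorm (grad_y g x y0))).
Proof.
have [[a [c Hg]] Hha HYc] := Hlin x Hx.
have [bb Hb] : exists bb : 'I_k -> 'rV[R]_m * R,
    forall i y, h i x y = (bb i).2 + dotv (bb i).1 y.
  have [ff Hff] := @choice _ _ (fun i (p : 'rV[R]_m * R) => forall y, h i x y = p.2 + dotv p.1 y)
    (fun i => let: ex_intro ai (ex_intro ci Hi) := Hha i in ex_intro _ (ai, ci) Hi).
  by exists ff.
pose b i := (bb i).1; pose cb i := (bb i).2.
have Hh i y : h i x y = hh b cb i y by rewrite /hh Hb.
have EY : Yset h x = YY b cb.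
  apply/funext => y; apply/propext; rewrite /Yset /YY /=.
  by split => H i; [rewrite -Hh | rewrite Hh]; exact: H i.
have Egrad : grad_y g x y0 = a.
  by apply/rowP => j; rewrite mxE; apply: derive_affine; exact: Hg.
have sy0 : ystar g h x y0 by rewrite Hy0.
have [Yy0 miny0] := sy0.
have Huniq : forall y, YY b cb y -> y != y0 -> dotv a y0 < dotv a y.
  move=> y Yy yn; rewrite ltNge; apply/negP => Hle.
  have : ystar g h x y.
    split; first by rewrite EY.
    move=> z Yz; apply: le_trans (miny0 z Yz); rewrite !Hg; lra.
  by rewrite Hy0 => /= yy; move: yn; rewrite yy eqxx.
have HYc' : compact (YY b cb) by rewrite -EY.
have Hsl : exists ys, forall i, hh b cb i ys < 0.
  by have [ys Hys] := Hslater x Hx; exists ys => i; rewrite -Hh.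
have Y0 : YY b cb y0 by rewrite -EY.
have [[y1 [Yy1 y1n]] [del del0 Hdel]] := tau_pos mpos HYc' Hsl Y0 Huniq.
set T := [set cosang (grad_y g x y0) (y - y0) | y in Yset h x `\ y0].
have Tlb : lbound T del.
  move=> z [y [Yy /= yn] <-]; rewrite Egrad; apply: Hdel; first by rewrite -EY.
  by apply/eqP.
have Tne : nonempty T.
  by exists (cosang (grad_y g x y0) (y1 - y0)), y1 => //; split; [rewrite EY | apply/eqP].
have tau_ge : del <= tau g h x y0 by apply: lb_le_inf.
have tau0 : 0 < tau g h x y0 by apply: lt_le_trans tau_ge.
split => // t t0 yt [sfyt minyt].
have Hyt : forall i, hh b cb i yt < 0 by move=> i; rewrite -Hh; exact: sfyt i.
have Hy0' : forall i, hh b cb i y0 <= 0 by exact: Y0.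
have D_le : dotv a (yt - y0) <= k%:R * t.
  apply: (@barrier_bound R m k a c b cb t yt y0 t0 Hyt Hy0').
  move=> z Hz.
  have := minyt z (fun i => ltac:(rewrite Hh; exact: Hz i)).
  rewrite /gbar !Hg.
  have E : forall w, \sum_(i < k) ln (- h i x w) = \sum_(i < k) ln (- (cb i + dotv (b i) w)).
    by move=> w; apply: eq_bigr => i _; rewrite Hb.
  by rewrite !E.
have phiE : phi f g h x = f x y0.
  by rewrite /phi Hy0 image_set1 inf1.
rewrite phiE.
have lipE : forall y, `|f x y - f x y0| <= Lf * enorm (y - y0).
  move=> y; have := Hlip x y x y0.
  by rewrite subrr enorm0 expr0n /= add0r sqrtr_sqr (ger0_norm (enorm_ge0 _)).
have Lf0 : 0 <= Lf.
  have := lipE y1.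
  have n0 : 0 < enorm (y1 - y0) by apply: enorm_gt0; rewrite subr_eq0.
  by move=> /(le_trans (normr_ge0 _)); rewrite pmulr_lge0.
apply: le_trans (lipE yt) _.
apply: ler_wpM2l => //.
rewrite Egrad.
case: (eqVneq yt y0) => [eyt|ytn].
  rewrite eyt subrr enorm0; apply: divr_ge0.
    by apply: mulr_ge0; [exact: ler0n | exact: ltW].
  by apply: mulr_ge0; [exact: ltW | exact: enorm_ge0].
have cos_ge : tau g h x y0 <= cosang a (yt - y0).
  apply: ge_inf; first by exists del.
  exists yt; last by rewrite Egrad.
  by split; [rewrite EY; exact: (fun i => ltW (Hyt i)) | apply/eqP].
have N0 : 0 < enorm (yt - y0) by apply: enorm_gt0; rewrite subr_eq0.
have A0 : 0 < enorm a.
  rewrite lt_neqAle enorm_ge0 andbT eq_sym; apply/eqP => A0.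
  by move: cos_ge; rewrite /cosang A0 mul0r invr0 mulr0 leNgt tau0.
have cosE : dotv a (yt - y0) = cosang a (yt - y0) * (enorm a * enorm (yt - y0)).
  by rewrite /cosang mulfVK // mulf_neq0 // gt_eqF.
rewrite ler_pdivlMr ?mulr_gt0 //.
apply: le_trans D_le; rewrite cosE.
have := ler_wpM2r (mulr_ge0 (enorm_ge0 a) (enorm_ge0 (yt - y0))) cos_ge.
have -> : enorm (yt - y0) * (tau g h x y0 * enorm a) =
   tau g h x y0 * (enorm a * enorm (yt - y0)) by ring.
by [].
Qed.
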